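(* Let $n\ge0$, $d\ge 1$, $l>0$, and $m = 2^{n+1}-1+2l$. For integers $m'=2^{n+1}-\epsilon+2l'$ with $\epsilon\in\{0,1\}$, $l'\ge0$, set $$k^G_n(d,m') = \sum_{i\ge0}\binom{2^{n+1}-\epsilon}{d-2i}\binom{l'}{i},\qquad \bar k^C_n(d,m') = \sum_{i\ge0}\binom{2^{n+1}-1-\epsilon}{d-1-2i}\binom{l'}{i}.$$ Then $$\frac12\left[k^G_n(d,m-1)+\bar k^C_n(d,m)-k^G_n(d,m)\right] = \sum_{i\ge0}\binom{2^{n+1}-2}{d-1-2i}\binom{l-1}{i}.$$
   Context: Binomial coefficients $\binom{a}{b}$ are $0$ when $b<0$ or $b>a$. Note $m-1 = 2^{n+1}+2(l-1)$, so $k^G_n(d,m-1)$ uses $\epsilon=0$, $l'=l-1$, while $k^G_n(d,m)$ and $\bar k^C_n(d,m)$ use $\epsilon=1$, $l'=l$. *)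

(* Defs.v *)
From mathcomp Require Import all_boot all_order all_algebra.
Set Implicit Arguments. Unset Strict Implicit. Unset Printing Implicit Defensive.
Import Order.TTheory GRing.Theory Num.Theory.

Definition binomZ (a : nat) (b : int) : nat :=
  match b with
  | Posz k => 'C(a, k)
  | Negz _ => 0%N
  end.

(* For m' = 2^(n+1) - eps + 2 l' (eps in {0,1}, l' >= 0):
   eps is the parity of m' (2^(n+1) is even), and
   l' = (m' + eps - 2^(n+1)) / 2. *)
Definition eps_of (m' : nat) : nat := odd m'.
Definition l_of (n m' : nat) : nat := (m' + eps_of m' - 2 ^ n.+1)./2.

(* The sums over i >= 0 are finite: terms with 2 i > d vanish,
   so summing over 0 <= i <= d is the full sum. *)
Definition kG (n d m' : nat) : nat :=
  \sum_(0 <= i < d.+1)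
     binomZ (2 ^ n.+1 - eps_of m') (d%:Z - (2 * i)%:Z) * 'C(l_of n m', i).

Definition kbarC (n d m' : nat) : nat :=
  \sum_(0 <= i < d.+1)
     binomZ (2 ^ n.+1 - 1 - eps_of m') (d%:Z - 1 - (2 * i)%:Z) * 'C(l_of n m', i).

(* Main.v *)
Require Import Defs.
From mathcomp Require Import all_boot all_order all_algebra.
From mathcomp Require Import zify ring.
Import Order.TTheory GRing.Theory Num.Theory.
Local Open Scope ring_scope.

Definition FF (d a : nat) (c : int) (L : nat) : rat :=
  \sum_(0 <= i < d.+1) (binomZ a (c - (2 * i)%N%:Z))%:R * ('C(L, i))%:R.

Lemma binomZS a b : binomZ a.+1 b = (binomZ a b + binomZ a (b - 1))%N.
Proof.
case: b => [[|k]|k] //=.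
- by rewrite bin0 bin0.
- by rewrite subn1 binS.
Qed.

Lemma FF_P d a c L : FF d a.+1 c L = FF d a c L + FF d a (c - 1) L.
Proof.
rewrite /FF -big_split /=; apply: eq_bigr => i _.
rewrite binomZS natrD mulrDl; congr (_ + _%:R * _); congr binomZ; lia.
Qed.

Lemma binomZ_neg a (b : int) : (b < 0)%R -> binomZ a b = 0%N.
Proof. by case: b. Qed.

Lemma FF_S d a (c : int) L : (c <= d%:Z)%R ->
  FF d a c L.+1 = FF d a c L + FF d a (c - 2) L.
Proof.
move=> hc; rewrite /FF big_nat_recl // [in RHS]big_nat_recl //.
rewrite [X in _ = _ + X]big_nat_recr //=.
rewrite (@binomZ_neg a (c - 2 - (2 * d)%N%:Z)); last by lia.
rewrite mul0r addr0 !bin0.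
rewrite addr0 -addrA -big_split /=; congr (_ + _).
apply: eq_bigr => i _; rewrite binS natrD mulrDr; congr (_ + _%:R * _).
congr binomZ; lia.
Qed.

Theorem lemma6p5 (n d l : nat) (hd : (1 <= d)%N) (hl : (0 < l)%N) :
  let m := (2 ^ n.+1 - 1 + 2 * l)%N in
  ((1 / 2 : rat) * ((kG n d m.-1)%:R + (kbarC n d m)%:R - (kG n d m)%:R)
   = (\sum_(0 <= i < d.+1)
        (binomZ (2 ^ n.+1 - 2) (d%:Z - 1 - (2 * i)%:Z) * 'C(l.-1, i))%N)%:R)%R.
Proof.
move=> m.
have [K hK] : exists K : nat, (2 ^ n.+1 = (K.+1).*2)%N.
  by exists (2 ^ n).-1; rewrite prednK ?expn_gt0 // expnS -mul2n.
have [L hL] : exists L : nat, l = L.+1 by exists l.-1; rewrite prednK.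
have hm : m = ((K + L.+1).*2.+1)%N by rewrite /m hK hL; lia.
have hm1 : m.-1 = ((K + L.+1).*2)%N by rewrite hm.
have e1 : eps_of m = 1%N by rewrite /eps_of hm /= odd_double.
have e0 : eps_of m.-1 = 0%N by rewrite /eps_of hm1 odd_double.
have l1 : l_of n m = L.+1.
  rewrite /l_of e1 hK hm.
  have -> : ((K + L.+1).*2.+1 + 1 - K.+1.*2 = (L.+1).*2)%N by lia.
  by rewrite doubleK.
have l0 : l_of n m.-1 = L.
  rewrite /l_of e0 hK hm1.
  have -> : ((K + L.+1).*2 + 0 - K.+1.*2 = L.*2)%N by lia.
  by rewrite doubleK.
set a0 := (2 ^ n.+1 - 2)%N.
have ha : (2 ^ n.+1 = a0.+2)%N by rewrite /a0 hK; lia.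
have E1 : (kG n d m.-1)%:R = FF d a0.+2 d%:Z L.
  rewrite /kG natr_sum /FF e0 l0 subn0 ha; apply: eq_bigr => i _; by rewrite natrM.
have E2 : (kG n d m)%:R = FF d a0.+1 d%:Z L.+1.
  rewrite /kG natr_sum /FF e1 l1 ha subn1 /=; apply: eq_bigr => i _; by rewrite natrM.
have E3 : (kbarC n d m)%:R = FF d a0 (d%:Z - 1) L.+1.
  rewrite /kbarC natr_sum /FF e1 l1 ha ?subn1 /= ?subn1 /=; apply: eq_bigr => i _; by rewrite natrM.
have E4 : (\sum_(0 <= i < d.+1)
        (binomZ (2 ^ n.+1 - 2) (d%:Z - 1 - (2 * i)%:Z) * 'C(l.-1, i))%N)%:R
        = FF d a0 (d%:Z - 1) L.
  rewrite natr_sum /FF hL /=; apply: eq_bigr => i _; by rewrite natrM.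
rewrite E1 E2 E3 E4.
rewrite !FF_S; try lia.
rewrite !FF_P.
have -> : (d%:Z - 1 - 2 = d%:Z - 2 - 1)%R by ring.
have -> : ((d%:Z - 1 - 1) = d%:Z - 2)%R by ring.
by field.
Qed.
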